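(* Let $\Phi:[a,b]\to\mathbb{R}$ be continuous and nowhere zero, let $a\le x_0\le b$, and suppose that $f(x),\mathcal Y_0(x_0,x),\mathcal Y_1(x_0,x),\dots,\mathcal Y_n(x_0,x)$ are real-valued functions of class $C^{n+1}$ on $[a,b]$. Then for $x\in[a,b]$ $$f(x)=\sum_{k=0}^n\frac{\mathcal D_kf(x_0)}{k!}\,\mathcal Y_k(x_0,x)+R_n(x),$$ where $\mathcal D_kf=\widetilde D^{(k)}f$ for $k$ odd, $\mathcal D_kf=D^{(k)}f$ for $k$ even, and $$R_n(x)=\frac{1}{n!}\int_{x_0}^x\big[\Phi(\xi)\big]^{(-1)^n}\,\mathcal Y_n(\xi,x)\,\mathcal D_{n+1}f(\xi)\,d\xi.$$
   Context: For $s,x\in[a,b]$ the $\Phi$-power functions are defined recursively by $X^{(0)}(s,x)\equiv 1$, $\widetilde X^{(0)}(s,x)\equiv 1$ and, for $n\ge 1$, $$X^{(n)}(s,x)=n\int_{s}^x X^{(n-1)}(s,\xi)\,\big(\Phi(\xi)\big)^{(-1)^n}\,d\xi,\qquad \widetilde X^{(n)}(s,x)=n\int_{s}^x \widetilde X^{(n-1)}(s,\xi)\,\Big(\frac{1}{\Phi(\xi)}\Big)^{(-1)^n}\,d\xi.$$ For $n\ge0$, $\mathcal Y_n=\widetilde X^{(n)}$ if $n$ is odd and $\mathcal Y_n=X^{(n)}$ if $n$ is even. The $\Phi$-derivatives are $Dh=\Phi\,h'$, $\widetilde Dh=\frac1\Phi h'$, with $D^{(0)}h=\widetilde D^{(0)}h=h$,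 $D^{(k)}h=D(\widetilde D^{(k-1)}h)$, $\widetilde D^{(k)}h=\widetilde D(D^{(k-1)}h)$ for $k\ge1$. In this part of the paper $\Phi$ is assumed real-valued. *)

(* Defs.v *)
From Stdlib Require Import Reals Factorial ClassicalEpsilon.
From Coquelicot Require Import Coquelicot.
Open Scope R_scope.

Definition is_deriv_on (a b : R) (f : R -> R) (x l : R) : Prop :=
  filterlim (fun y => (f y - f x) / (y - x))
    (within (fun y => a <= y <= b /\ y <> x) (locally x)) (locally l).

(* the derivative relative to [a,b] (an arbitrary value where it does not exist) *)
Definition deriv_on (a b : R) (f : R -> R) (x : R) : R :=
  epsilon (inhabits 0) (fun l => is_deriv_on a b f x l).

Definition cont_on (a b : R) (f : R -> R) : Prop :=
  forall x, a <= x <= b ->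
    filterlim f (within (fun y => a <= y <= b) (locally x)) (locally (f x)).

Fixpoint Ck_on (a b : R) (k : nat) (f : R -> R) : Prop :=
  match k with
  | O => cont_on a b f
  | S m => (forall x, a <= x <= b -> exists l, is_deriv_on a b f x l)
           /\ Ck_on a b m (deriv_on a b f)
  end.

Fixpoint Xpow (Phi : R -> R) (n : nat) (s x : R) : R :=
  match n with
  | O => 1
  | S m => INR (S m) *
      RInt (fun xi => Xpow Phi m s xi *
                      (if Nat.even (S m) then Phi xi else / Phi xi)) s x
  end.

Fixpoint Xtpow (Phi : R -> R) (n : nat) (s x : R) : R :=
  match n with
  | O => 1
  | S m => INR (S m) *
      RInt (fun xi => Xtpow Phi m s xi *
                      (if Nat.even (S m) then / Phi xi else Phi xi)) s x
  end.

Definition Ypow (Phi : R -> R) (n : nat) (s x : R) : R :=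
  if Nat.odd n then Xtpow Phi n s x else Xpow Phi n s x.

Definition Dphi (a b : R) (Phi h : R -> R) : R -> R :=
  fun x => Phi x * deriv_on a b h x.
Definition Dtphi (a b : R) (Phi h : R -> R) : R -> R :=
  fun x => deriv_on a b h x / Phi x.

Fixpoint DDpair (a b : R) (Phi : R -> R) (k : nat) (h : R -> R) : (R -> R) * (R -> R) :=
  match k with
  | O => (h, h)
  | S m => let p := DDpair a b Phi m h in
           (Dphi a b Phi (snd p), Dtphi a b Phi (fst p))
  end.

Definition Dk_plain (a b : R) (Phi : R -> R) (k : nat) (h : R -> R) : R -> R :=
  fst (DDpair a b Phi k h).
Definition Dk_tilde (a b : R) (Phi : R -> R) (k : nat) (h : R -> R) : R -> R :=
  snd (DDpair a b Phi k h).

Definition calD (a b : R) (Phi : R -> R) (k : nat) (h : R -> R) : R -> R :=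
  if Nat.odd k then Dk_tilde a b Phi k h else Dk_plain a b Phi k h.

Definition phipow (Phi : R -> R) (n : nat) (xi : R) : R :=
  if Nat.even n then Phi xi else / Phi xi.

Definition Rem (a b : R) (Phi f : R -> R) (n : nat) (x0 x : R) : R :=
  / INR (fact n) *
  RInt (fun xi => phipow Phi n xi * Ypow Phi n xi x * calD a b Phi (S n) f xi) x0 x.

(* Main.v *)
Require Import Defs.
From Stdlib Require Import Reals Factorial.
From Coquelicot Require Import Coquelicot.
From Stdlib Require Import Arith ClassicalEpsilon Lra Lia FunctionalExtensionality.
Open Scope R_scope.

Lemma ball_R (x y e : R) : ball x e y <-> Rabs (y - x) < e.
Proof. unfold ball; simpl. unfold AbsRing_ball. simpl. unfold abs, minus, plus, opp. simpl. tauto. Qed.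

Lemma isd_lim a b u x l : is_deriv_on a b u x l <->
  limit1_in (fun y => (u y - u x)/(y-x)) (fun y => a <= y <= b /\ y <> x) l x.
Proof.
  unfold is_deriv_on. rewrite filterlim_locally. unfold limit1_in, limit_in. simpl. unfold Rdist.
  split.
  - intros H eps Heps. destruct (H (mkposreal eps Heps)) as [d Hd]. exists d. split.
    + apply cond_pos.
    + intros y [Dy Hy]. generalize (Hd y (proj2 (ball_R _ _ _) Hy) Dy). rewrite ball_R. simpl. auto.
  - intros H eps. destruct (H eps (cond_pos eps)) as [d [Hd0 Hd]].
    exists (mkposreal d Hd0). intros y Hy Dy. apply (proj1 (ball_R _ _ _)) in Hy. apply ball_R. apply Hd. split; auto.
Qed.

Lemma cont_lim a b u : cont_on a b u <->
  forall x, a <= x <= b -> limit1_in u (fun y => a <= y <= b) (u x) x.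
Proof.
  unfold cont_on. split; intros H x Hx; specialize (H x Hx); revert H;
  rewrite filterlim_locally; unfold limit1_in, limit_in; simpl; unfold Rdist.
  - intros H eps Heps. destruct (H (mkposreal eps Heps)) as [d Hd]. exists d. split.
    + apply cond_pos.
    + intros y [Dy Hy]. generalize (Hd y (proj2 (ball_R _ _ _) Hy) Dy). rewrite ball_R. simpl. auto.
  - intros H eps. destruct (H eps (cond_pos eps)) as [d [Hd0 Hd]].
    exists (mkposreal d Hd0). intros y Hy Dy. apply (proj1 (ball_R _ _ _)) in Hy. apply ball_R. apply Hd. split; auto.
Qed.

Lemma lim_ext f g D l x : limit1_in f D l x -> (forall y, D y -> f y = g y) -> limit1_in g D l x.
Proof.
  unfold limit1_in, limit_in; simpl. intros H E eps Heps. destruct (H eps Heps) as [d [Hd H1]].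
  exists d; split; auto. intros y [Dy Hy]. rewrite <- E; auto.
Qed.

Lemma lim_sub f (D D' : R -> Prop) l x : limit1_in f D l x -> (forall y, D' y -> D y) -> limit1_in f D' l x.
Proof.
  unfold limit1_in, limit_in; simpl. intros H E eps Heps. destruct (H eps Heps) as [d [Hd H1]].
  exists d; split; auto. intros y [Dy Hy]. apply H1; auto.
Qed.

Lemma lim_const (c : R) D x : limit1_in (fun _ => c) D c x.
Proof.
  unfold limit1_in, limit_in; simpl. intros eps Heps. exists 1. split. lra.
  intros. unfold Rdist. replace (c - c) with 0 by ring. rewrite Rabs_R0. lra.
Qed.

Lemma isd_cont a b u x l : a <= x <= b -> is_deriv_on a b u x l ->
  limit1_in u (fun y => a <= y <= b) (u x) x.
Proof.
  intros Hx H. apply isd_lim in H.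
  assert (H2 : limit1_in (fun y => u x + (u y - u x)/(y-x) * (y - x)) (fun y => a <= y <= b /\ y <> x) (u x + l * (x - x)) x).
  { apply limit_plus. apply lim_const. apply limit_mul. exact H. apply limit_minus. apply lim_x. apply lim_const. }
  replace (u x + l * (x - x)) with (u x) in H2 by ring.
  assert (H3 : limit1_in u (fun y => a <= y <= b /\ y <> x) (u x) x).
  { apply (lim_ext _ _ _ _ _ H2). intros y [_ Hy]. field. intro E; apply Hy; lra. }
  unfold limit1_in, limit_in in *; simpl in *. intros eps Heps. destruct (H3 eps Heps) as [d [Hd H4]].
  exists d; split; auto. intros y [Dy Hy]. destruct (Req_dec y x) as [->|Ne].
  - unfold Rdist. replace (u x - u x) with 0 by ring. rewrite Rabs_R0. lra.
  - apply H4. auto.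
Qed.

Lemma adh_ab a b x : a < b -> a <= x <= b -> adhDa (fun y => a <= y <= b /\ y <> x) x.
Proof.
  intros Hab Hx alp Halp. unfold Rdist.
  destruct (Rlt_dec x b) as [Hl|Hl].
  - exists (x + Rmin (alp/2) (b - x)).
    assert (0 < Rmin (alp/2) (b-x)) by (apply Rmin_glb_lt; lra).
    assert (Rmin (alp/2) (b-x) <= alp/2) by apply Rmin_l.
    assert (Rmin (alp/2) (b-x) <= b - x) by apply Rmin_r.
    split. split. lra. lra. replace (x + Rmin (alp / 2) (b - x) - x) with (Rmin (alp/2) (b-x)) by ring.
    rewrite Rabs_pos_eq; lra.
  - exists (x - Rmin (alp/2) (b - a)).
    assert (0 < Rmin (alp/2) (b-a)) by (apply Rmin_glb_lt; lra).
    assert (Rmin (alp/2) (b-a) <= alp/2) by apply Rmin_l.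
    assert (Rmin (alp/2) (b-a) <= b - a) by apply Rmin_r.
    split. split. lra. lra. replace (x - Rmin (alp / 2) (b - a) - x) with (- Rmin (alp/2) (b-a)) by ring.
    rewrite Rabs_Ropp. rewrite Rabs_pos_eq; lra.
Qed.

Lemma deriv_on_eq a b u x l : a < b -> a <= x <= b -> is_deriv_on a b u x l -> deriv_on a b u x = l.
Proof.
  intros Hab Hx H. unfold deriv_on.
  assert (Hs := epsilon_spec (inhabits 0) (fun l => is_deriv_on a b u x l) (ex_intro _ l H)).
  apply isd_lim in H. apply isd_lim in Hs.
  eapply single_limit. apply (adh_ab a b x Hab Hx). exact Hs. exact H.
Qed.

Lemma isd_ext a b u v x l : a <= x <= b -> (forall y, a <= y <= b -> u y = v y) ->
  is_deriv_on a b u x l -> is_deriv_on a b v x l.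
Proof.
  intros Hx E H. apply isd_lim in H. apply isd_lim. apply (lim_ext _ _ _ _ _ H).
  intros y [Hy _]. rewrite !E; auto.
Qed.

Lemma isd_const a b (c : R) x : is_deriv_on a b (fun _ => c) x 0.
Proof.
  apply isd_lim. apply (lim_ext (fun _ => 0)). apply lim_const. intros y [_ Hy]. field.
  intro E; apply Hy; lra.
Qed.

Lemma isd_id a b x : is_deriv_on a b (fun y => y) x 1.
Proof.
  apply isd_lim. apply (lim_ext (fun _ => 1)). apply lim_const. intros y [_ Hy]. field.
  intro E; apply Hy; lra.
Qed.

Lemma isd_plus a b u v x l1 l2 : is_deriv_on a b u x l1 -> is_deriv_on a b v x l2 ->
  is_deriv_on a b (fun y => u y + v y) x (l1 + l2).
Proof.
  intros H1 H2. apply isd_lim in H1. apply isd_lim in H2. apply isd_lim.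
  apply (lim_ext _ _ _ _ _ (limit_plus _ _ _ _ _ _ H1 H2)). intros y [_ Hy]. field.
  intro E; apply Hy; lra.
Qed.

Lemma isd_opp a b u x l : is_deriv_on a b u x l -> is_deriv_on a b (fun y => - u y) x (- l).
Proof.
  intros H1. apply isd_lim in H1. apply isd_lim.
  apply (lim_ext _ _ _ _ _ (limit_Ropp _ _ _ _ H1)). intros y [_ Hy]. field.
  intro E; apply Hy; lra.
Qed.

Lemma isd_mult a b u v x l1 l2 : a <= x <= b -> is_deriv_on a b u x l1 -> is_deriv_on a b v x l2 ->
  is_deriv_on a b (fun y => u y * v y) x (l1 * v x + u x * l2).
Proof.
  intros Hx H1 H2. assert (Cv := isd_cont _ _ _ _ _ Hx H2).
  apply isd_lim in H1. apply isd_lim in H2. apply isd_lim.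
  assert (Cv' : limit1_in v (fun y => a <= y <= b /\ y <> x) (v x) x).
  { apply (lim_sub _ _ _ _ _ Cv). intros y [Hy _]; auto. }
  apply (lim_ext _ _ _ _ _ (limit_plus _ _ _ _ _ _ (limit_mul _ _ _ _ _ _ H1 Cv') (limit_mul _ _ _ _ _ _ (lim_const (u x) _ x) H2))).
  intros y [_ Hy]. field.
  intro E; apply Hy; lra.
Qed.

Lemma isd_scal a b (k : R) u x l : is_deriv_on a b u x l -> is_deriv_on a b (fun y => k * u y) x (k * l).
Proof.
  intros H1. apply isd_lim in H1. apply isd_lim.
  apply (lim_ext _ _ _ _ _ (limit_mul _ _ _ _ _ _ (lim_const k _ x) H1)). intros y [_ Hy]. field.
  intro E; apply Hy; lra.
Qed.

Lemma isd_inv a b u x l : a <= x <= b -> (forall y, a <= y <= b -> u y <> 0) -> is_deriv_on a b u x l ->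
  is_deriv_on a b (fun y => / u y) x (- l / (u x * u x)).
Proof.
  intros Hx Hnz H1. assert (Cu := isd_cont _ _ _ _ _ Hx H1).
  apply isd_lim in H1. apply isd_lim.
  assert (Cu' : limit1_in u (fun y => a <= y <= b /\ y <> x) (u x) x).
  { apply (lim_sub _ _ _ _ _ Cu). intros y [Hy _]; auto. }
  assert (Hux := Hnz x Hx).
  assert (L := limit_mul _ _ _ _ _ _ (limit_Ropp _ _ _ _ H1) (limit_inv _ _ _ _ (limit_mul _ _ _ _ _ _ Cu' (lim_const (u x) _ x)) (Rmult_integral_contrapositive_currified _ _ Hux Hux))).
  replace (- l / (u x * u x)) with (- l * / (u x * u x)) by (unfold Rdiv; ring).
  apply (lim_ext _ _ _ _ _ L).
  intros y [Hy Hy']. assert (u y <> 0) by auto. field. repeat split; auto.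
  intro E; apply Hy'; lra.
Qed.

Lemma cont_const a b (c : R) : cont_on a b (fun _ => c).
Proof. apply cont_lim. intros. apply lim_const. Qed.

Lemma cont_plus a b u v : cont_on a b u -> cont_on a b v -> cont_on a b (fun y => u y + v y).
Proof. rewrite !cont_lim. intros H1 H2 x Hx. apply limit_plus; auto. Qed.

Lemma cont_mult a b u v : cont_on a b u -> cont_on a b v -> cont_on a b (fun y => u y * v y).
Proof. rewrite !cont_lim. intros H1 H2 x Hx. apply limit_mul; auto. Qed.

Lemma cont_opp a b u : cont_on a b u -> cont_on a b (fun y => - u y).
Proof. rewrite !cont_lim. intros H1 x Hx. apply limit_Ropp; auto. Qed.

Lemma cont_inv a b u : cont_on a b u -> (forall y, a <= y <= b -> u y <> 0) -> cont_on a b (fun y => / u y).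
Proof. rewrite !cont_lim. intros H1 H2 x Hx. apply limit_inv; auto. Qed.

Lemma cont_ext a b u v : (forall y, a <= y <= b -> u y = v y) -> cont_on a b u -> cont_on a b v.
Proof. rewrite !cont_lim. intros E H1 x Hx. rewrite <- E by auto. apply (lim_ext _ _ _ _ _ (H1 x Hx)). auto. Qed.

Lemma deriv_cont a b u : (forall y, a <= y <= b -> exists l, is_deriv_on a b u y l) -> cont_on a b u.
Proof. intros H. apply cont_lim. intros x Hx. destruct (H x Hx) as [l Hl]. eapply isd_cont; eauto. Qed.

Definition clamp (a b y : R) := Rmin b (Rmax a y).

Lemma clamp_id a b y : a <= y <= b -> clamp a b y = y.
Proof. intros. unfold clamp, Rmin, Rmax. repeat destruct Rle_dec; lra. Qed.

Lemma clamp_in a b y : a <= b -> a <= clamp a b y <= b.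
Proof. intros. unfold clamp, Rmin, Rmax. repeat destruct Rle_dec; lra. Qed.

Lemma clamp_lip a b y z : a <= b -> Rabs (clamp a b y - clamp a b z) <= Rabs (y - z).
Proof.
  intros. unfold clamp, Rmin, Rmax. unfold Rabs.
  repeat destruct Rle_dec; repeat destruct Rcase_abs; lra.
Qed.

Lemma cpt_eps f z : (forall eps, eps > 0 -> exists d, d > 0 /\ forall y, Rabs (y - z) < d -> Rabs (f y - f z) < eps)
  -> continuity_pt f z.
Proof.
  intros H. unfold continuity_pt, continue_in, limit1_in, limit_in. simpl. unfold Rdist.
  intros eps Heps. destruct (H eps Heps) as [d [Hd H1]]. exists d. split; auto.
  intros y [_ Hy]. auto.
Qed.

Lemma cont_clamp a b u z : a <= b -> cont_on a b u -> continuity_pt (fun y => u (clamp a b y)) z.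
Proof.
  intros Hab Hu. apply cpt_eps. intros eps Heps.
  rewrite cont_lim in Hu. destruct (Hu (clamp a b z) (clamp_in a b z Hab) eps Heps) as [d [Hd H1]].
  exists d. split; auto. intros y Hy. simpl in H1. unfold Rdist in H1. apply H1. split.
  apply clamp_in; auto. eapply Rle_lt_trans. apply clamp_lip; auto. exact Hy.
Qed.

Lemma continuous_clamp a b u z : a <= b -> cont_on a b u -> continuous (fun y => u (clamp a b y)) z.
Proof. intros. apply continuity_pt_filterlim. apply cont_clamp; auto. Qed.

Lemma between_in a b s x z : a <= s <= b -> a <= x <= b -> Rmin s x <= z <= Rmax s x -> a <= z <= b.
Proof. intros. unfold Rmin, Rmax in *. destruct Rle_dec; lra. Qed.

Lemma ex_RInt_on a b h s x : a <= b -> cont_on a b h -> a <= s <= b -> a <= x <= b -> ex_RInt h s x.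
Proof.
  intros Hab Hh Hs Hx. apply (ex_RInt_ext (fun y => h (clamp a b y))).
  - intros z Hz. rewrite clamp_id; auto. apply (between_in a b s x z); auto. lra.
  - apply (@ex_RInt_continuous R_CompleteNormedModule). intros. apply continuous_clamp; auto.
Qed.

Lemma dpl_isd a b F y l : derivable_pt_lim F y l -> is_deriv_on a b F y l.
Proof.
  intros H. apply isd_lim. unfold limit1_in, limit_in; simpl; unfold Rdist.
  intros eps Heps. destruct (H eps Heps) as [d Hd]. exists d. split. apply cond_pos.
  intros z [[Hz Hzy] Hd1]. specialize (Hd (z - y)). replace (y + (z - y)) with z in Hd by ring.
  apply Hd. intro E; apply Hzy; lra. exact Hd1.
Qed.

Lemma isd_interior a b F y l : a < y < b -> is_deriv_on a b F y l -> derivable_pt_lim F y l.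
Proof.
  intros Hy H. apply isd_lim in H. unfold limit1_in, limit_in in H; simpl in H; unfold Rdist in H.
  intros eps Heps. destruct (H eps Heps) as [alp [Ha H1]].
  assert (Hd : 0 < Rmin alp (Rmin (y - a) (b - y))).
  { apply Rmin_glb_lt. lra. apply Rmin_glb_lt; lra. }
  exists (mkposreal _ Hd). intros h Hh Hh2. simpl in Hh2.
  assert (E1 := Rmin_l alp (Rmin (y - a) (b - y))).
  assert (E2 := Rmin_r alp (Rmin (y - a) (b - y))).
  assert (E3 := Rmin_l (y - a) (b - y)). assert (E4 := Rmin_r (y - a) (b - y)).
  assert (Hh3 : Rabs h < alp) by lra.
  assert (Hb : - (y - a) < h < b - y).
  { assert (Hr : Rabs h < Rmin (y - a) (b - y)) by lra. apply Rabs_def2 in Hr. lra. }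
  specialize (H1 (y + h)). replace (y + h - y) with h in H1 by ring. apply H1.
  split. split. split; lra. intro E; apply Hh; lra. auto.
Qed.

Lemma FTC1 a b h c y : a <= b -> cont_on a b h -> a <= c <= b -> a <= y <= b ->
  is_deriv_on a b (fun t => RInt h c t) y (h y).
Proof.
  intros Hab Hh Hc Hy.
  set (hc := fun t => h (clamp a b t)).
  assert (Ex : forall s t, ex_RInt hc s t).
  { intros. apply (@ex_RInt_continuous R_CompleteNormedModule). intros. apply continuous_clamp; auto. }
  assert (D : is_derive (fun t => RInt hc c t) y (hc y)).
  { apply (is_derive_RInt hc (fun t => RInt hc c t) c y). apply filter_forall. intros t. apply (@RInt_correct R_CompleteNormedModule). apply Ex.
    apply continuous_clamp; auto. }
  apply is_derive_Reals in D. apply (dpl_isd a b) in D.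
  unfold hc in D. rewrite clamp_id in D by auto.
  apply (isd_ext a b (fun t => RInt hc c t)); auto.
  intros t Ht. apply RInt_ext. intros z Hz. unfold hc. rewrite clamp_id; auto.
  apply (between_in a b c t z); auto. lra.
Qed.

Lemma const_on a b u : a <= b -> (forall y, a <= y <= b -> is_deriv_on a b u y 0) ->
  forall s x, a <= s <= b -> a <= x <= b -> u x = u s.
Proof.
  intros Hab H s x Hs Hx.
  assert (Cu : cont_on a b u). { apply deriv_cont. intros y Hy. exists 0. auto. }
  destruct (MVT_gen (fun y => u (clamp a b y)) s x (fun _ => 0)) as [c [Hc E]].
  - intros z Hz. apply is_derive_Reals.
    assert (Hz' : a < z < b).
    { unfold Rmin, Rmax in Hz. destruct Rle_dec; lra. }
    apply (isd_interior a b); auto.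
    apply (isd_ext a b u). lra. intros. rewrite clamp_id; auto. apply H. lra.
  - intros. apply cont_clamp; auto.
  - rewrite !clamp_id in E by auto. lra.
Qed.

Lemma FTC2 a b g h s x : a <= b -> (forall y, a <= y <= b -> is_deriv_on a b g y (h y)) -> cont_on a b h ->
  a <= s <= b -> a <= x <= b -> RInt h s x = g x - g s.
Proof.
  intros Hab Hg Hh Hs Hx.
  assert (E := const_on a b (fun t => g t - RInt h s t) Hab).
  assert (E' : g x - RInt h s x = g s - RInt h s s).
  { apply E; auto. intros y Hy. replace 0 with (h y + - h y) by ring.
    apply isd_plus. auto. apply isd_opp. apply FTC1; auto. }
  rewrite RInt_point in E'. simpl in E'. unfold zero in E'; simpl in E'. lra.
Qed.

Lemma deriv_spec a b u x : (exists l, is_deriv_on a b u x l) -> is_deriv_on a b u x (deriv_on a b u x).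
Proof. intros H. unfold deriv_on. apply (epsilon_spec (inhabits 0) (fun l => is_deriv_on a b u x l) H). Qed.

Lemma Ck_mono a b k u : Ck_on a b (S k) u -> Ck_on a b k u.
Proof.
  revert u. induction k as [|k IH]; intros u [H1 H2].
  - apply deriv_cont. exact H1.
  - split. exact H1. apply IH. exact H2.
Qed.

Lemma Ck_cont a b k u : Ck_on a b k u -> cont_on a b u.
Proof. induction k. auto. intros H; apply IHk, Ck_mono, H. Qed.

Lemma Ck_isd a b k u x : a <= x <= b -> Ck_on a b (S k) u -> is_deriv_on a b u x (deriv_on a b u x).
Proof. intros Hx [H1 _]. apply deriv_spec. auto. Qed.

Lemma Ck_der a b k u : Ck_on a b (S k) u -> Ck_on a b k (deriv_on a b u).
Proof. intros [_ H]. exact H. Qed.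

Lemma Ck_ext a b k u v : a < b -> (forall y, a <= y <= b -> u y = v y) -> Ck_on a b k u -> Ck_on a b k v.
Proof.
  intros Hab. revert u v. induction k as [|k IH]; intros u v E H.
  - apply (cont_ext a b u v E H).
  - destruct H as [H1 H2]. split.
    + intros x Hx. destruct (H1 x Hx) as [l Hl]. exists l. apply (isd_ext a b u v); auto.
    + apply (IH (deriv_on a b u)); auto. intros y Hy. symmetry. apply deriv_on_eq; auto.
      apply (isd_ext a b u v); auto. apply deriv_spec. auto.
Qed.

Lemma Ck_S a b k u du : a < b -> (forall y, a <= y <= b -> is_deriv_on a b u y (du y)) ->
  Ck_on a b k du -> Ck_on a b (S k) u.
Proof.
  intros Hab H1 H2. split.
  - intros x Hx. exists (du x). auto.
  - apply (Ck_ext a b k du); auto. intros y Hy. symmetry. apply deriv_on_eq; auto.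
Qed.

Lemma Ck_const a b k (c : R) : a < b -> Ck_on a b k (fun _ => c).
Proof.
  intros Hab. induction k. apply cont_const.
  apply (Ck_S a b k _ (fun _ => 0)); auto. intros. apply isd_const.
  clear IHk. induction k. apply cont_const.
  apply (Ck_S a b k _ (fun _ => 0)); auto. intros. apply isd_const.
Qed.

Lemma Ck_plus a b k u v : a < b -> Ck_on a b k u -> Ck_on a b k v -> Ck_on a b k (fun y => u y + v y).
Proof.
  intros Hab. revert u v. induction k as [|k IH]; intros u v Hu Hv.
  - apply cont_plus; auto.
  - apply (Ck_S a b k _ (fun y => deriv_on a b u y + deriv_on a b v y)); auto.
    + intros y Hy. apply isd_plus; eapply Ck_isd; eauto.
    + apply IH; apply Ck_der; auto.
Qed.

Lemma Ck_mult a b k u v : a < b -> Ck_on a b k u -> Ck_on a b k v -> Ck_on a b k (fun y => u y * v y).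
Proof.
  intros Hab. revert u v. induction k as [|k IH]; intros u v Hu Hv.
  - apply cont_mult; auto.
  - apply (Ck_S a b k _ (fun y => deriv_on a b u y * v y + u y * deriv_on a b v y)); auto.
    + intros y Hy. apply isd_mult; auto; eapply Ck_isd; eauto.
    + apply Ck_plus; auto; apply IH; auto using Ck_der, Ck_mono.
Qed.

Lemma Ck_inv a b k u : a < b -> (forall y, a <= y <= b -> u y <> 0) -> Ck_on a b k u -> Ck_on a b k (fun y => / u y).
Proof.
  intros Hab Hnz. revert u Hnz. induction k as [|k IH]; intros u Hnz Hu.
  - apply cont_inv; auto.
  - apply (Ck_S a b k _ (fun y => - deriv_on a b u y / (u y * u y))); auto.
    + intros y Hy. apply isd_inv; auto; eapply Ck_isd; eauto.
    + apply (Ck_ext a b k (fun y => (-1) * (deriv_on a b u y * ((/ u y) * (/ u y))))); auto.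
      * intros y Hy. assert (u y <> 0) by auto. field. auto.
      * apply Ck_mult; auto. apply Ck_const; auto. apply Ck_mult; auto. apply Ck_der; auto.
        apply Ck_mult; [auto | apply IH; auto using Ck_mono | apply IH; auto using Ck_mono].
Qed.

Definition HypP a b Phi := a < b /\ cont_on a b Phi /\ (forall y, a <= y <= b -> Phi y <> 0).

Definition W (Phi : R -> R) (t : bool) (k : nat) (y : R) : R :=
  if xorb t (Nat.even k) then Phi y else / Phi y.

Fixpoint Q (Phi : R -> R) (t : bool) (n : nat) (s x : R) : R :=
  match n with
  | O => 1
  | S m => RInt (fun y => Q Phi t m s y * W Phi t (S m) y) s x
  end.

Fixpoint bb (Phi : R -> R) (c : R) (t : bool) (j : nat) (s : R) : R :=
  match j with
  | O => 1
  | S i => RInt (fun u => W Phi t 1 u * bb Phi c (negb t) i u) s c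
  end.

Definition ts (t : bool) (j : nat) := xorb t (Nat.odd j).

Definition G Phi c t n s x := sum_f_R0 (fun j => bb Phi c t j s * Q Phi (ts t j) (n - j) c x) n.

Definition bbd Phi c t j s := match j with O => 0 | S i => - (W Phi t 1 s * bb Phi c (negb t) i s) end.
Definition Qd Phi c t m x := match m with O => 0 | S m' => Q Phi t m' c x * W Phi t (S m') x end.

Lemma RInt_pt0 (f : R -> R) x : RInt f x x = 0.
Proof. rewrite RInt_point. reflexivity. Qed.

Lemma W_shift Phi t j k y : W Phi (ts t j) k y = W Phi t (j + k) y.
Proof.
  unfold W, ts. rewrite <- Nat.negb_even, Nat.even_add.
  destruct (Nat.even j), (Nat.even k), t; reflexivity.
Qed.

Lemma ts_S t i : ts t (S i) = ts (negb t) i.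
Proof. unfold ts. rewrite Nat.odd_succ, <- Nat.negb_even. destruct t, (Nat.even i); reflexivity. Qed.

Lemma W_cont a b Phi t k : HypP a b Phi -> cont_on a b (W Phi t k).
Proof.
  intros [Hab [Hc Hnz]]. unfold W. destruct (xorb t (Nat.even k)).
  - exact Hc.
  - apply cont_inv; auto.
Qed.

Lemma W_nz a b Phi t k y : HypP a b Phi -> a <= y <= b -> W Phi t k y <> 0.
Proof.
  intros [Hab [Hc Hnz]] Hy. unfold W. destruct (xorb t (Nat.even k)). auto. apply Rinv_neq_0_compat; auto.
Qed.

Lemma Q_cont a b Phi s m t : HypP a b Phi -> a <= s <= b -> cont_on a b (Q Phi t m s).
Proof.
  intros HP Hs. destruct HP as [Hab [Hc Hnz]] eqn:EHP. revert t. induction m as [|m IH]; intros t.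
  - apply cont_const.
  - apply deriv_cont. intros y Hy. eexists. simpl.
    apply (FTC1 a b (fun y => Q Phi t m s y * W Phi t (S m) y) s y); auto. lra.
    apply cont_mult. apply IH. apply W_cont; auto.
Qed.

Lemma Q_dx a b Phi s m t x : HypP a b Phi -> a <= s <= b -> a <= x <= b ->
  is_deriv_on a b (Q Phi t (S m) s) x (Q Phi t m s x * W Phi t (S m) x).
Proof.
  intros HP Hs Hx. destruct HP as [Hab [Hc Hnz]] eqn:EHP. simpl.
  apply (FTC1 a b (fun y => Q Phi t m s y * W Phi t (S m) y) s x); auto. lra.
  apply cont_mult. apply Q_cont; auto. apply W_cont; auto.
Qed.

Lemma Q_d a b Phi c m t x : HypP a b Phi -> a <= c <= b -> a <= x <= b ->
  is_deriv_on a b (Q Phi t m c) x (Qd Phi c t m x).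
Proof.
  intros HP Hc Hx. destruct m. apply isd_const. apply Q_dx; auto.
Qed.

Lemma FTC1' a b h c y : a <= b -> cont_on a b h -> a <= c <= b -> a <= y <= b ->
  is_deriv_on a b (fun t => RInt h t c) y (- h y).
Proof.
  intros Hab Hh Hc Hy. apply (isd_ext a b (fun t => - RInt h c t)); auto.
  - intros z Hz. rewrite <- (opp_RInt_swap h c z). reflexivity. apply (ex_RInt_on a b); auto.
  - apply isd_opp. apply FTC1; auto.
Qed.

Lemma bb_cont a b Phi c i t : HypP a b Phi -> a <= c <= b -> cont_on a b (bb Phi c t i).
Proof.
  intros HP Hc. destruct HP as [Hab [HPc Hnz]] eqn:EHP. revert t. induction i as [|i IH]; intros t.
  - apply cont_const.
  - apply deriv_cont. intros y Hy. eexists. simpl.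
    apply (FTC1' a b (fun u => W Phi t 1 u * bb Phi c (negb t) i u) c y); auto. lra.
    apply cont_mult. apply W_cont; auto. apply IH.
Qed.

Lemma bb_d a b Phi c j t s : HypP a b Phi -> a <= c <= b -> a <= s <= b ->
  is_deriv_on a b (bb Phi c t j) s (bbd Phi c t j s).
Proof.
  intros HP Hc Hs. destruct HP as [Hab [HPc Hnz]] eqn:EHP. destruct j as [|i].
  - apply isd_const.
  - simpl. apply (FTC1' a b (fun u => W Phi t 1 u * bb Phi c (negb t) i u) c s); auto. lra.
    apply cont_mult. apply W_cont; auto. apply bb_cont; auto.
Qed.

Lemma isd_sum a b (F : nat -> R -> R) (F' : nat -> R) n y :
  (forall j, (j <= n)%nat -> is_deriv_on a b (F j) y (F' j)) ->
  is_deriv_on a b (fun z => sum_f_R0 (fun j => F j z) n) y (sum_f_R0 F' n).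
Proof.
  induction n as [|n IH]; intros H.
  - simpl. apply H. lia.
  - simpl. apply isd_plus. apply IH. intros; apply H; lia. apply H; lia.
Qed.

Lemma L1 Phi c t m s x :
  sum_f_R0 (fun j => bbd Phi c t j s * Q Phi (ts t j) (S m - j) c x) (S m)
  = - W Phi t 1 s * G Phi c (negb t) m s x.
Proof.
  rewrite decomp_sum by lia. simpl pred. unfold G. rewrite scal_sum.
  replace (bbd Phi c t 0 s * Q Phi (ts t 0) (S m - 0) c x) with 0 by (simpl; ring).
  rewrite Rplus_0_l. apply sum_eq. intros i Hi. cbn [bbd]. rewrite ts_S.
  replace (S m - S i)%nat with (m - i)%nat by lia. ring.
Qed.

Lemma L2 Phi c t m s x :
  sum_f_R0 (fun j => bb Phi c t j s * Qd Phi c (ts t j) (S m - j) x) (S m)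
  = W Phi t (S m) x * G Phi c t m s x.
Proof.
  rewrite tech5. replace (S m - S m)%nat with 0%nat by lia.
  assert (E0 : Qd Phi c (ts t (S m)) 0 x = 0) by reflexivity. rewrite E0.
  rewrite Rmult_0_r, Rplus_0_r. unfold G. rewrite scal_sum. apply sum_eq. intros j Hj.
  rewrite (Nat.sub_succ_l j m Hj). cbn [Qd]. rewrite W_shift.
  replace (j + S (m - j))%nat with (S m) by lia. ring.
Qed.

Lemma isd_val a b u x l l' : is_deriv_on a b u x l -> l = l' -> is_deriv_on a b u x l'.
Proof. intros H ->. exact H. Qed.

Lemma isd_scalr a b u (k : R) x l : is_deriv_on a b u x l -> is_deriv_on a b (fun y => u y * k) x (l * k).
Proof.
  intros H. apply (isd_ext a b (fun y => k * u y)). 2: intros; ring.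
Abort.

Lemma isd_scalr a b u (k : R) x l : is_deriv_on a b u x l -> is_deriv_on a b (fun y => u y * k) x (l * k).
Proof.
  intros H. apply isd_lim in H. apply isd_lim.
  apply (lim_ext _ _ _ _ _ (limit_mul _ _ _ _ _ _ H (lim_const k _ x))). intros y [_ Hy]. field.
  intro E; apply Hy; lra.
Qed.

Lemma G_diag_d a b Phi c t m s : HypP a b Phi -> a <= c <= b -> a <= s <= b ->
  is_deriv_on a b (fun y => G Phi c t (S m) y y) s
    (- W Phi t 1 s * G Phi c (negb t) m s s + W Phi t (S m) s * G Phi c t m s s).
Proof.
  intros HP Hc Hs. unfold G at 1.
  eapply isd_val.
  - apply (isd_sum a b (fun j y => bb Phi c t j y * Q Phi (ts t j) (S m - j) c y)
      (fun j => bbd Phi c t j s * Q Phi (ts t j) (S m - j) c s + bb Phi c t j s * Qd Phi c (ts t j) (S m - j) s)).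
    intros j Hj. apply isd_mult; auto. apply bb_d; auto. apply Q_d; auto.
  - rewrite plus_sum, L1, L2. reflexivity.
Qed.

Lemma E_zero a b Phi c m : HypP a b Phi -> a <= c <= b ->
  forall t s, a <= s <= b -> G Phi c t (S m) s s = 0.
Proof.
  intros HP Hc. assert (Hab : a < b) by apply HP.
  induction m as [|m IH]; intros t s Hs.
  - rewrite (const_on a b (fun y => G Phi c t 1 y y)) with (s := c); auto; try lra.
    + apply sum_eq_R0. intros j Hj. destruct j as [|i].
      * cbn [bb Q Nat.sub]. rewrite RInt_pt0. ring.
      * cbn [bb]. rewrite RInt_pt0. ring.
    + intros y Hy. eapply isd_val. apply G_diag_d; auto. unfold G. simpl. ring.
  - rewrite (const_on a b (fun y => G Phi c t (S (S m)) y y)) with (s := c); auto; try lra.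
    + apply sum_eq_R0. intros j Hj. destruct j as [|i].
      * cbn [bb Q Nat.sub]. rewrite RInt_pt0. ring.
      * cbn [bb]. rewrite RInt_pt0. ring.
    + intros y Hy. eapply isd_val. apply G_diag_d; auto. rewrite !IH; auto. ring.
Qed.

Lemma Chen a b Phi c n : HypP a b Phi -> a <= c <= b ->
  forall t s x, a <= s <= b -> a <= x <= b -> Q Phi t n s x = G Phi c t n s x.
Proof.
  intros HP Hc. assert (Hab : a < b) by apply HP.
  induction n as [|m IH]; intros t s x Hs Hx.
  - unfold G. simpl. ring.
  - assert (K : Q Phi t (S m) s x - G Phi c t (S m) s x = Q Phi t (S m) s s - G Phi c t (S m) s s).
    { apply (const_on a b (fun y => Q Phi t (S m) s y - G Phi c t (S m) s y)); auto. lra.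
      intros y Hy. eapply isd_val. apply isd_plus. apply Q_dx; auto. apply isd_opp.
      unfold G at 1.
      apply (isd_sum a b (fun j y => bb Phi c t j s * Q Phi (ts t j) (S m - j) c y)
        (fun j => bb Phi c t j s * Qd Phi c (ts t j) (S m - j) y)).
      intros j Hj. apply isd_scal. apply Q_d; auto.
      rewrite L2. rewrite <- IH; auto. ring. }
    rewrite (E_zero a b) in K; auto. cbn [Q] in K. rewrite RInt_pt0 in K. cbn [Q]. lra.
Qed.

Definition Qsd Phi t n s x := match n with O => 0 | S m => - (W Phi t 1 s * Q Phi (negb t) m s x) end.

Lemma Q_ds a b Phi n t s x : HypP a b Phi -> a <= s <= b -> a <= x <= b ->
  is_deriv_on a b (fun y => Q Phi t n y x) s (Qsd Phi t n s x).
Proof.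
  intros HP Hs Hx. assert (Hab : a < b) by apply HP.
  destruct n as [|m].
  - cbn [Q Qsd]. apply isd_const.
  - apply (isd_ext a b (fun y => G Phi a t (S m) y x)); auto.
    { intros y Hy. symmetry. apply (Chen a b); auto. lra. }
    unfold G at 1. eapply isd_val.
    apply (isd_sum a b (fun j y => bb Phi a t j y * Q Phi (ts t j) (S m - j) a x)
        (fun j => bbd Phi a t j s * Q Phi (ts t j) (S m - j) a x)).
    intros j Hj. apply isd_scalr. apply bb_d; auto. lra.
    rewrite L1. cbn [Qsd]. rewrite <- (Chen a b); auto. ring. lra.
Qed.

Lemma Q_s_cont a b Phi n t x : HypP a b Phi -> a <= x <= b -> cont_on a b (fun y => Q Phi t n y x).
Proof.
  intros HP Hx. apply deriv_cont. intros y Hy. eexists. apply Q_ds; auto.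
Qed.

Lemma Xpow_Q a b Phi n : HypP a b Phi -> forall s x, a <= s <= b -> a <= x <= b ->
  Xpow Phi n s x = INR (fact n) * Q Phi false n s x.
Proof.
  intros HP. assert (Hab : a < b) by apply HP.
  induction n as [|m IH]; intros s x Hs Hx.
  - simpl. ring.
  - cbn [Xpow Q].
    rewrite (RInt_ext _ (fun xi => INR (fact m) * (Q Phi false m s xi * W Phi false (S m) xi))).
    2:{ intros z Hz. rewrite IH; auto. unfold W. destruct (Nat.even (S m)); simpl; ring.
        apply (between_in a b s x z); auto. lra. }
    assert (E : RInt (fun xi => INR (fact m) * (Q Phi false m s xi * W Phi false (S m) xi)) s x
             = INR (fact m) * RInt (fun xi => Q Phi false m s xi * W Phi false (S m) xi) s x).
    { exact (RInt_scal (fun xi => Q Phi false m s xi * W Phi false (S m) xi) s x (INR (fact m))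
        (ex_RInt_on a b _ s x (Rlt_le _ _ Hab) (cont_mult _ _ _ _ (Q_cont a b Phi s m false HP Hs) (W_cont a b Phi false (S m) HP)) Hs Hx)). }
    rewrite E. change (fact (S m)) with (S m * fact m)%nat. rewrite mult_INR. ring.
Qed.

Lemma Xtpow_Q a b Phi n : HypP a b Phi -> forall s x, a <= s <= b -> a <= x <= b ->
  Xtpow Phi n s x = INR (fact n) * Q Phi true n s x.
Proof.
  intros HP. assert (Hab : a < b) by apply HP.
  induction n as [|m IH]; intros s x Hs Hx.
  - simpl. ring.
  - cbn [Xtpow Q].
    rewrite (RInt_ext _ (fun xi => INR (fact m) * (Q Phi true m s xi * W Phi true (S m) xi))).
    2:{ intros z Hz. rewrite IH; auto. unfold W. destruct (Nat.even (S m)); simpl; ring.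
        apply (between_in a b s x z); auto. lra. }
    assert (E : RInt (fun xi => INR (fact m) * (Q Phi true m s xi * W Phi true (S m) xi)) s x
             = INR (fact m) * RInt (fun xi => Q Phi true m s xi * W Phi true (S m) xi) s x).
    { exact (RInt_scal (fun xi => Q Phi true m s xi * W Phi true (S m) xi) s x (INR (fact m))
        (ex_RInt_on a b _ s x (Rlt_le _ _ Hab) (cont_mult _ _ _ _ (Q_cont a b Phi s m true HP Hs) (W_cont a b Phi true (S m) HP)) Hs Hx)). }
    rewrite E. change (fact (S m)) with (S m * fact m)%nat. rewrite mult_INR. ring.
Qed.

Lemma Ypow_Q a b Phi k s x : HypP a b Phi -> a <= s <= b -> a <= x <= b ->
  Ypow Phi k s x = INR (fact k) * Q Phi (Nat.odd k) k s x.
Proof.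
  intros HP Hs Hx. unfold Ypow. destruct (Nat.odd k).
  apply (Xtpow_Q a b); auto. apply (Xpow_Q a b); auto.
Qed.

Lemma calD_S a b Phi k h x : calD a b Phi (S k) h x =
  if Nat.odd k then Phi x * deriv_on a b (calD a b Phi k h) x
  else deriv_on a b (calD a b Phi k h) x / Phi x.
Proof.
  unfold calD, Dk_tilde, Dk_plain. cbn [DDpair fst snd]. rewrite Nat.odd_succ, <- Nat.negb_odd.
  destruct (Nat.odd k); reflexivity.
Qed.

Lemma calD_0 a b Phi h x : calD a b Phi 0 h x = h x.
Proof. reflexivity. Qed.

Lemma deriv_calD a b Phi k h y : Phi y <> 0 ->
  deriv_on a b (calD a b Phi k h) y = phipow Phi k y * calD a b Phi (S k) h y.
Proof.
  intros Hnz. rewrite calD_S. unfold phipow. rewrite <- Nat.negb_odd.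
  destruct (Nat.odd k); simpl; field; auto.
Qed.

Lemma Ck_le a b j k u : (j <= k)%nat -> Ck_on a b k u -> Ck_on a b j u.
Proof. induction 1; auto. intros Hk; apply IHle, Ck_mono, Hk. Qed.

Lemma phipow_W Phi m y : W Phi (Nat.odd (S m)) 1 y = phipow Phi m y.
Proof. unfold W, phipow. rewrite Nat.odd_succ. destruct (Nat.even m); reflexivity. Qed.

Lemma main_ab a b Phi f x0 n : a < b ->
  cont_on a b Phi ->
  (forall x, a <= x <= b -> Phi x <> 0) ->
  a <= x0 <= b ->
  Ck_on a b (S n) f ->
  (forall k, (k <= n)%nat -> Ck_on a b (S n) (Ypow Phi k x0)) ->
  forall x, a <= x <= b ->
    f x = sum_f_R0 (fun k => calD a b Phi k f x0 / INR (fact k) * Ypow Phi k x0 x) n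
          + Rem a b Phi f n x0 x.
Proof.
  intros Hab HPc HPnz Hx0 Hf HY x Hx.
  assert (HP : HypP a b Phi) by (repeat split; auto).
  assert (CPhi : Ck_on a b n Phi).
  { destruct n as [|m]. exact HPc.
    assert (H1 := HY 1%nat ltac:(lia)).
    assert (D1 : forall y, a <= y <= b -> is_deriv_on a b (Ypow Phi 1 x0) y (Phi y)).
    { intros y Hy. apply (isd_ext a b (fun z => INR (fact 1) * Q Phi true 1 x0 z)). exact Hy.
      intros z Hz. symmetry. apply (Ypow_Q a b); auto.
      eapply isd_val. apply isd_scal. apply Q_dx; auto. simpl. unfold W. simpl. ring. }
    apply Ck_der in H1. apply (Ck_ext a b _ (deriv_on a b (Ypow Phi 1 x0)) _ Hab); auto.
    intros y Hy. apply deriv_on_eq; auto. }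
  assert (CiPhi : Ck_on a b n (fun y => / Phi y)) by (apply Ck_inv; auto).
  assert (Cpp : forall k, Ck_on a b n (phipow Phi k)).
  { intros k. unfold phipow. destruct (Nat.even k). exact CPhi. exact CiPhi. }
  assert (CD : forall k, (k <= S n)%nat -> Ck_on a b (S n - k) (calD a b Phi k f)).
  { induction k as [|k IH]; intros Hk.
    - rewrite Nat.sub_0_r. exact Hf.
    - assert (IH' := IH ltac:(lia)). rewrite (Nat.sub_succ_l k n) in IH' by lia.
      apply Ck_der in IH'.
      apply (Ck_ext a b _ (fun y => if Nat.odd k then Phi y * deriv_on a b (calD a b Phi k f) y
                              else deriv_on a b (calD a b Phi k f) y * / Phi y)); auto.
      + intros y Hy. rewrite calD_S. destruct (Nat.odd k); reflexivity.
      + replace (S n - S k)%nat with (n - k)%nat by lia.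
        destruct (Nat.odd k).
        * apply Ck_mult; auto. apply (Ck_le a b _ n); auto; lia.
        * apply Ck_mult; auto. apply (Ck_le a b _ n); auto; lia. }
  set (g := fun N xi => sum_f_R0 (fun k => calD a b Phi k f xi * Q Phi (Nat.odd k) k xi x) N).
  assert (Tk : forall k xi, (k <= n)%nat -> a <= xi <= b ->
    is_deriv_on a b (fun y => calD a b Phi k f y * Q Phi (Nat.odd k) k y x) xi
      (phipow Phi k xi * calD a b Phi (S k) f xi * Q Phi (Nat.odd k) k xi x
       + calD a b Phi k f xi * Qsd Phi (Nat.odd k) k xi x)).
  { intros k xi Hk Hxi. eapply isd_val. apply isd_mult; auto.
    - apply (Ck_isd a b (n - k)). auto. rewrite <- Nat.sub_succ_l by lia. apply CD; lia.
    - apply Q_ds; auto.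
    - rewrite deriv_calD; auto. }
  assert (gd : forall N xi, (N <= n)%nat -> a <= xi <= b ->
    is_deriv_on a b (g N) xi (phipow Phi N xi * calD a b Phi (S N) f xi * Q Phi (Nat.odd N) N xi x)).
  { induction N as [|N IH]; intros xi HN Hxi.
    - eapply isd_val. apply (Tk 0%nat xi); auto. cbn [Qsd]. ring.
    - eapply isd_val. apply isd_plus. apply IH; auto; lia. apply (Tk (S N) xi); auto.
      cbn [Qsd]. rewrite phipow_W. rewrite Nat.odd_succ, <- Nat.negb_odd, Bool.negb_involutive. ring. }
  set (hh := fun xi => phipow Phi n xi * calD a b Phi (S n) f xi * Q Phi (Nat.odd n) n xi x).
  assert (Chh : cont_on a b hh).
  { unfold hh. apply cont_mult. apply cont_mult. apply (Ck_cont a b n). auto.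
    apply (Ck_cont a b (S n - S n)). apply CD; lia. apply Q_s_cont; auto. }
  assert (FT : RInt hh x0 x = g n x - g n x0).
  { apply (FTC2 a b); auto; try lra. }
  assert (gx : forall N, g N x = f x).
  { induction N as [|N IH]. unfold g. cbn [sum_f_R0 Q]. rewrite calD_0. ring.
    unfold g in *. simpl sum_f_R0. rewrite IH. cbn [Q]. rewrite RInt_pt0. ring. }
  assert (Sm : sum_f_R0 (fun k => calD a b Phi k f x0 / INR (fact k) * Ypow Phi k x0 x) n = g n x0).
  { unfold g. apply sum_eq. intros k Hk. rewrite (Ypow_Q a b); auto. field. apply INR_fact_neq_0. }
  assert (Rm : Rem a b Phi f n x0 x = RInt hh x0 x).
  { unfold Rem.
    rewrite (RInt_ext _ (fun xi => INR (fact n) * hh xi)).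
    2:{ intros z Hz. assert (Hz' : a <= z <= b) by (apply (between_in a b x0 x z); auto; lra).
        rewrite (Ypow_Q a b); auto. unfold hh. match goal with |- ?A = ?B => change (@eq R A B) end. ring. }
    assert (E : RInt (fun xi => INR (fact n) * hh xi) x0 x = INR (fact n) * RInt hh x0 x).
    { exact (RInt_scal hh x0 x (INR (fact n)) (ex_RInt_on a b _ x0 x (Rlt_le _ _ Hab) Chh Hx0 Hx)). }
    rewrite E. field. apply INR_fact_neq_0. }
  rewrite Sm, Rm, FT, gx. ring.
Qed.

Lemma Ypow_diag Phi m s : Ypow Phi (S m) s s = 0.
Proof.
  unfold Ypow. destruct (Nat.odd (S m)); cbn [Xpow Xtpow]; rewrite RInt_pt0; ring.
Qed.

Theorem theorem5 (a b : R) (Phi f : R -> R) (x0 : R) (n : nat) :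
  cont_on a b Phi ->
  (forall x, a <= x <= b -> Phi x <> 0) ->
  a <= x0 <= b ->
  Ck_on a b (S n) f ->
  (forall k, (k <= n)%nat -> Ck_on a b (S n) (Ypow Phi k x0)) ->
  forall x, a <= x <= b ->
    f x = sum_f_R0 (fun k => calD a b Phi k f x0 / INR (fact k) * Ypow Phi k x0 x) n
          + Rem a b Phi f n x0 x.
Proof.
  intros HPc HPnz Hx0 Hf HY x Hx.
  destruct (Rlt_dec a b) as [Hab|Hab].
  - apply (main_ab a b); auto.
  - assert (x = x0) by lra. assert (x0 = a) by lra. subst.
    unfold Rem. rewrite RInt_pt0.
    assert (S0 : forall N, sum_f_R0 (fun k => calD a b Phi k f a / INR (fact k) * Ypow Phi k a a) N = f a).
    { induction N as [|N IH].
      - simpl. unfold Ypow. simpl. rewrite calD_0. field.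
      - simpl sum_f_R0. rewrite IH, Ypow_diag. ring. }
    rewrite S0. ring.
Qed.
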